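(* Let $q$ be a fixed prime power and $0<k<n$. Given an integer $i$ with $0\le i<\left[\begin{smallmatrix} n\\ k\end{smallmatrix}\right]_q$, Encoding Algorithm C (which produces the subspace $X\in\mathcal{G}_q(n,k)$ with $\mathrm{Ind}_{\mathcal{F}}(X)=i$) can be carried out with $O(k^{5/2}(n-k)^{5/2})$ operations on $q$-ary digits.
   Context: $\mathcal{G}_q(n,k)$ is the set of $k$-dimensional subspaces of $\mathbb{F}_q^n$ (field elements identified with $\mathbb{Z}_q$); $\left[\begin{smallmatrix} n\\ k\end{smallmatrix}\right]_q=\prod_{i=0}^{k-1}\frac{q^{n-i}-1}{q^{k-i}-1}$. A subspace $X$ is described by its Ferrers tableaux form $\mathcal{F}(X)$: from the unique $k\times n$ reduced row echelon matrix whose rows span $X$, delete in each row the leading one and everything to its left, and delete the columns containing leading ones, right-justifying the remaining entries. Its Ferrers diagram $\mathcal{F}_X$ (dots in place of entries) is represented as $(\mathcal{F}_{n-k},\dots,\mathcal{F}_1)$, $\mathcal{F}_i$ = number of dots in the $i$-th column from the right, $0\le\mathcal{F}_{i+1}\le\mathcal{F}_i\le k$; $|\mathcal{F}_X|$ is the number of dots. The entries vector $x$ lists entries of $\mathcal{F}(X)$ right to left, top to bottom, $\{x\}=\sum_t x_tq^{|\mathcal{F}_X|-t}$. $p(a,\eta,s)$ is the number of partitions of $s$ fitting in an $a\times\eta$ box; $\alpha_s=p(k,n-k,s)$. Among diagrams of size $m$, $\mathcal{F}<\widetilde{\mathcal{F}}$ if $\mathcal{F}_i>\widetilde{\mathcal{F}}_i$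 at the least $i$ where they differ; $\mathrm{ind}_m(\mathcal{F})$ is the number of size-$m$ diagrams in a $k\times(n-k)$ box preceding $\mathcal{F}$, and $\mathrm{ind}_m^{-1}$ is its inverse, computed by Algorithm B: with $N_m(\mathcal{F}_j,\dots,\mathcal{F}_1)=p(\mathcal{F}_j,n-k-j,m-\sum_{t\le j}\mathcal{F}_t)$ and $\mathcal{F}_0=k$, $h=$ given index, for $j=1,\dots,n-k$: if $\sum_{t<j}\mathcal{F}_t=m$ set $\mathcal{F}_j=0$; otherwise set $\ell=0$ and while $h\ge N_m(\mathcal{F}_{j-1}-\ell,\mathcal{F}_{j-1},\dots,\mathcal{F}_1)$ replace $h$ by $h-N_m(\mathcal{F}_{j-1}-\ell,\mathcal{F}_{j-1},\dots,\mathcal{F}_1)$ and $\ell$ by $\ell+1$; then set $\mathcal{F}_j=\mathcal{F}_{j-1}-\ell$. Encoding Algorithm C: set $i_0=i$; for $j=0,\dots,k(n-k)$, with $m=k(n-k)-j$: if $i_j<\alpha_mq^m$, set $|\mathcal{F}_X|=m$, $\mathcal{F}_X=\mathrm{ind}_m^{-1}(\lfloor i_j/q^m\rfloor)$, let $x$ be the base-$q$ representation (length $m$) of $i_j-\lfloor i_j/q^m\rfloor q^m$, and stop; otherwise set $i_{j+1}=i_j-\alpha_mq^m$. Complexity counts operations on $q$-ary digits; multiplication by $q^i$ is a shift. *)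

(* Defs.v *)
From mathcomp Require Import all_boot.
Set Implicit Arguments. Unset Strict Implicit. Unset Printing Implicit Defensive.

Definition prime_power (q : nat) : Prop :=
  exists p e : nat, prime p /\ 0 < e /\ q = p ^ e.

Definition gauss_binom (q n k : nat) : nat :=
  (\prod_(i < k) (q ^ (n - i) - 1)) %/ (\prod_(i < k) (q ^ (k - i) - 1)).

(* p(a, eta, s): number of partitions of s fitting in an a x eta box,
   defined by the standard recurrence
   p(a,eta,s) = p(a-1,eta,s) + [a <= s] p(a,eta-1,s-a),  p(0,_,s) = p(_,0,s) = [s = 0]. *)
Fixpoint pbox (a : nat) : nat -> nat -> nat :=
  match a with
  | 0 => fun _ s => nat_of_bool (s == 0)
  | a'.+1 => fix g (eta s : nat) {struct eta} : nat :=
      match eta with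
      | 0 => nat_of_bool (s == 0)
      | eta'.+1 => pbox a' eta s + (if a <= s then g eta' (s - a) else 0)
      end
  end.

Definition qdigits (q x : nat) : nat := if x == 0 then 1 else (trunc_log q x).+1.

(* cost of an addition / subtraction / comparison of a and b *)
Definition opcost (q a b : nat) : nat := maxn (qdigits q a) (qdigits q b).

(* Table
   lookups are free; multiplication by q^m is a shift (free). *)
Definition table_cost (q k e : nat) : nat :=
  \sum_(1 <= a < k.+1) \sum_(1 <= h < e.+1) \sum_(0 <= s < (k * e).+1)
     opcost q (pbox a.-1 h s) (if a <= s then pbox a h.-1 (s - a) else 0).

Fixpoint algB_inner (fuel : nat) (q m e j Fprev sumPrev h l : nat)
  : nat * nat * nat :=
  match fuel with
  | 0 => (l, h, 0)
  | fuel'.+1 =>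
      let a := Fprev - l in
      let sumF := sumPrev + a in
      let N := if sumF <= m then pbox a (e - j) (m - sumF) else 0 in
      let c := opcost q sumPrev a + opcost q sumF m + opcost q h N in
      if N <= h then
        let: (l', h', c') := algB_inner fuel' q m e j Fprev sumPrev (h - N) l.+1 in
        (l', h', c + opcost q h N + c')
      else (l, h, c)
  end.

Fixpoint algB_outer (cnt : nat) (q m e j Fprev sumPrev h : nat) : seq nat * nat :=
  match cnt with
  | 0 => ([::], 0)
  | cnt'.+1 =>
      if sumPrev == m then
        let: (Fs, c) := algB_outer cnt' q m e j.+1 0 sumPrev h in
        (0 :: Fs, opcost q sumPrev m + c)
      else
        let: (lh, c1) := algB_inner Fprev.+1 q m e j Fprev sumPrev h 0 in
        let: (l, h') := lh in
        let Fj := Fprev - l in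
        let: (Fs, c2) := algB_outer cnt' q m e j.+1 Fj (sumPrev + Fj) h' in
        (Fj :: Fs, opcost q sumPrev m + c1 + opcost q sumPrev Fj + c2)
  end.

(* ind_m^{-1}(h) in the k x e box: the diagram (F_e, ..., F_1), with cost *)
Definition algB (q k e m h : nat) : seq nat * nat :=
  let: (Fs, c) := algB_outer e q m e 1 k 0 h in (rev Fs, c).

Definition qrep (q m r : nat) : seq nat :=
  [seq (r %/ q ^ t) %% q | t <- rev (iota 0 m)].

(* returns (Some (diagram, entries vector), cost) when it stops *)
Fixpoint algC_loop (cnt j : nat) (q k e ij : nat)
  : option (seq nat * seq nat) * nat :=
  match cnt with
  | 0 => (None, 0)
  | cnt'.+1 =>
      let m := k * e - j in
      let A := pbox k e m * q ^ m in          (* alpha_m q^m: lookup + shift *)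
      let c0 := opcost q (k * e) j + opcost q ij A in
      if ij < A then
        let t := ij %/ q ^ m in                 (* shift *)
        let r := ij - t * q ^ m in
        let: (F, cB) := algB q k e m t in
        (Some (F, qrep q m r), c0 + qdigits q ij + opcost q ij (t * q ^ m) + cB + m)
      else
        let: (res, c) := algC_loop cnt' j.+1 q k e (ij - A) in
        (res, c0 + opcost q ij A + c)
  end.

Definition algC (q n k i : nat) : option (seq nat * seq nat) * nat :=
  let e := n - k in
  let: (res, c) := algC_loop (k * e).+1 0 q k e i in
  (res, table_cost q k e + c).

(* Main.v *)
Require Import Defs.
From Stdlib Require Import Reals Lra.
Open Scope R_scope.
Lemma exp_pow_n (y : R) (n : nat) : exp y ^ n = exp (INR n * y).
Proof.
induction n as [|n IH]; simpl. rewrite Rmult_0_l, exp_0; reflexivity.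
rewrite IH, <- exp_plus. f_equal. destruct n; simpl; lra.
Qed.
Lemma real_bound (d : nat) : (0 < d)%nat -> (INR d + 1) ^ d <= 3 * INR d ^ d.
Proof.
intros Hd. assert (Hx : 0 < INR d) by (apply lt_0_INR; exact Hd).
assert (E : INR d + 1 = INR d * (1 + / INR d)) by (field; lra).
rewrite E, Rpow_mult_distr. rewrite Rmult_comm. apply Rmult_le_compat_r.
apply pow_le; lra.
apply Rle_trans with (exp (/ INR d) ^ d).
apply pow_incr. split. assert (0 < / INR d) by (apply Rinv_0_lt_compat; lra). lra.
left. apply exp_ineq1. apply Rinv_neq_0_compat; lra.
rewrite exp_pow_n. rewrite Rinv_r by lra. apply exp_le_3.
Qed.
Close Scope R_scope.
From mathcomp Require Import all_boot zify.
From Stdlib Require Import Lia.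
Lemma INR_expn m n : INR (m ^ n) = pow (INR m) n.
Proof. elim: n => [|n IH]; first by rewrite expn0.
by rewrite expnS -multE mult_INR IH /=. Qed.
Lemma nat_bound d : 0 < d -> d.+1 ^ d <= 3 * d ^ d.
Proof.
move=> Hd. apply/leP. apply INR_le. rewrite -multE mult_INR !INR_expn S_INR.
have : (0 < d)%coq_nat by apply/ltP.
move/real_bound => H. have E3 : INR 3 = IZR 3 by rewrite /INR; lra. rewrite E3; exact H.
Qed.

Lemma pboxSS a h s : pbox a.+1 h.+1 s =
  pbox a h.+1 s + (if a.+1 <= s then pbox a.+1 h (s - a.+1) else 0).
Proof. by []. Qed.

Lemma pbox_zero a h s : a * h < s -> pbox a h s = 0.
Proof.
elim: a h s => [|a IHa] h s.
  by rewrite mul0n /=; case: s.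
elim: h s => [|h IHh] s.
  by rewrite muln0 /=; case: s.
move=> Hs; rewrite pboxSS IHa; last by apply: leq_ltn_trans Hs; rewrite leq_mul2r leqnSn orbT.
case: ifP => // Has. rewrite IHh //. rewrite ltn_subRL. by rewrite mulnS in Hs.
Qed.

Lemma pbox_bin a h s : pbox a h s <= 'C(a + h, a).
Proof.
elim: a h s => [|a IHa] h s.
  by rewrite bin0; case: s.
elim: h s => [|h IHh] s.
  by rewrite addn0 binn; case: s.
rewrite pboxSS addnS addSn binS [X in _ <= X]addnC. apply: leq_add.
  by move: (IHa h.+1 s); rewrite addnS.
by case: ifP. Qed.

Lemma bin_monoh a h : 'C(a + h, a) <= 'C(a + h.+1, a).
Proof. case: a => [|a]; first by rewrite !bin0. by rewrite addnS binS leq_addr. Qed.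

Lemma bin_monoa a h : 'C(a + h, a) <= 'C(a.+1 + h, a.+1).
Proof. rewrite addSn binS; exact: leq_addl. Qed.

Lemma bin_mono a h k e : a <= k -> h <= e -> 'C(a + h, a) <= 'C(k + e, k).
Proof.
move=> Hak Hhe. apply: (@leq_trans 'C(a + e, a)).
  elim: e Hhe => [|e IH]. by rewrite leqn0 => /eqP ->.
  rewrite leq_eqVlt => /orP [/eqP -> //|]. rewrite ltnS => /IH H. exact: leq_trans H (bin_monoh _ _).
elim: k Hak => [|k IH]. by rewrite leqn0 => /eqP ->.
rewrite leq_eqVlt => /orP [/eqP -> //|]. rewrite ltnS => /IH H. exact: leq_trans H (bin_monoa _ _).
Qed.

Definition Gs q a h := \sum_(s < (a * h).+1) pbox a h s * q ^ s.

Lemma Gs_ext q a h M : a * h < M -> \sum_(s < M) pbox a h s * q ^ s = Gs q a h.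
Proof.
move=> HM. have -> : M = (a * h).+1 + (M - (a * h).+1) by rewrite subnKC.
elim: (M - (a * h).+1) => [|r IH]; first by rewrite addn0.
by rewrite addnS big_ord_recr /= IH pbox_zero ?mul0n ?addn0 // ltnS leq_addr.
Qed.

Lemma shift_sum q b (g : nat -> nat) M :
  \sum_(s < M + b) (if b <= s then g (s - b) else 0) * q ^ s =
  q ^ b * \sum_(t < M) g t * q ^ t.
Proof.
elim: M => [|M IH].
  rewrite big_ord0 muln0 add0n big1 // => i _. by rewrite leqNgt ltn_ord.
rewrite addSn big_ord_recr /= IH big_ord_recr /= leq_addl addnK mulnDr.
rewrite expnD; nia.
Qed.

Lemma Gs_rec q a h : Gs q a.+1 h.+1 = Gs q a h.+1 + q ^ a.+1 * Gs q a.+1 h.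
Proof.
rewrite {1}/Gs. under eq_bigr do rewrite pboxSS mulnDl.
rewrite big_split /= Gs_ext; last by rewrite ltnS leq_mul2r leqnSn orbT.
congr (_ + _).
have -> : (a.+1 * h.+1).+1 = (a.+1 * h).+1 + a.+1 by rewrite mulnS addnC addSn.
by rewrite shift_sum.
Qed.

Lemma Gs0h q h : Gs q 0 h = 1.
Proof. by rewrite /Gs mul0n big_ord1. Qed.

Lemma Gsa0 q a : Gs q a 0 = 1.
Proof. by rewrite /Gs muln0 big_ord1; case: a. Qed.

Definition Den q n := \prod_(i < n) (q ^ (n - i) - 1).

Lemma Den0 q : Den q 0 = 1.
Proof. by rewrite /Den big_ord0. Qed.

Lemma DenS q n : Den q n.+1 = (q ^ n.+1 - 1) * Den q n.
Proof. by rewrite /Den big_ord_recl subn0. Qed.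

Lemma Gs_Den q k e : 0 < q -> Gs q k e * Den q k * Den q e = Den q (k + e).
Proof.
move=> hq.
elim: k e => [|k IHk] e; first by rewrite Gs0h Den0 !mul1n add0n.
elim: e => [|e IHe]; first by rewrite Gsa0 Den0 addn0 muln1 mul1n.
rewrite Gs_rec (DenS q k) (DenS q e) addSn addnS (DenS q (k + e).+1).
have := IHk e.+1. rewrite addnS (DenS q e) => H1.
move: IHe. rewrite addSn (DenS q k) => H2.
have hx : 0 < q ^ k.+1 by rewrite expn_gt0 hq.
have hy : 0 < q ^ e.+1 by rewrite expn_gt0 hq.
have -> : q ^ (k + e).+2 = q ^ k.+1 * q ^ e.+1 by rewrite -expnD addSn addnS.
move: H1 H2 hx hy.
move: (q ^ k.+1) (q ^ e.+1) (Gs q k e.+1) (Gs q k.+1 e) (Den q k) (Den q e) (Den q (k + e).+1) => x y A B Dk De Z.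
move=> H1 H2 hx hy.
nia.
Qed.


Lemma Num_Den q k e : \prod_(i < k) (q ^ (k + e - i) - 1) * Den q e = Den q (k + e).
Proof.
elim: k => [|k IH]; first by rewrite big_ord0 mul1n add0n.
rewrite big_ord_recl subn0 addSn DenS -IH mulnA. congr (_ * _ * _).
Qed.

Lemma Den_gt0 q n : 1 < q -> 0 < Den q n.
Proof.
move=> hq; elim: n => [|n IH]; first by rewrite Den0.
rewrite DenS muln_gt0 IH andbT subn_gt0.
exact: leq_trans hq (leq_pexp2l (ltnW hq) (ltn0Sn n)).
Qed.

Lemma gauss_Gs q k e : 1 < q -> gauss_binom q (k + e) k = Gs q k e.
Proof.
move=> hq. rewrite /gauss_binom.
have H := Num_Den q k e. rewrite -(@Gs_Den q k e (ltnW hq)) in H.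
have He := @Den_gt0 q e hq.
move/eqP: H. rewrite eqn_pmul2r // => /eqP ->. rewrite -/(Den q k) mulnK //.
exact: Den_gt0.
Qed.

Lemma algC_some q k e cnt : forall j ij, j + cnt = (k * e).+1 ->
  ij < \sum_(s < cnt) pbox k e s * q ^ s -> (algC_loop cnt j q k e ij).1 != None.
Proof.
elim: cnt => [|cnt IH] j ij Hj; first by rewrite big_ord0.
rewrite big_ord_recr /= => Hij.
have Hm : k * e - j = cnt by move: Hj; clear; move: (k * e) => N; lia.
rewrite Hm.
case: ifP => HA.
  by case: (algB q k e cnt (ij %/ q ^ cnt)).
have := IH j.+1 (ij - pbox k e cnt * q ^ cnt).
case: (algC_loop cnt j.+1 q k e (ij - pbox k e cnt * q ^ cnt)) => [res c] /=.
apply.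
  by rewrite addSnnS.
rewrite ltn_subLR; first by rewrite addnC.
by rewrite leqNgt HA.
Qed.

Lemma binC' a b : 'C(a + b, a) = 'C(a + b, b).
Proof. by rewrite -{2}(addnK b a) bin_sub // leq_addl. Qed.

Lemma bin_pow a b d : 'C(a + b, a) * d ^ b <= d.+1 ^ (a + b).
Proof.
have Hb : b < (a + b).+1 by rewrite ltnS leq_addl.
rewrite -add1n expnDn (bigD1 (Ordinal Hb)) //=.
rewrite exp1n mul1n binC'. exact: leq_addr.
Qed.

Lemma nat_bound6 d : 0 < d -> d.+1 ^ d.+1 <= 6 * d ^ d.+1.
Proof.
move=> Hd. have := @nat_bound d Hd. rewrite !expnS. move: (d.+1 ^ d) (d ^ d) => X Y.
move=> H. have H' : d.+1 <= 2 * d by lia.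
apply: leq_trans (leq_mul H' H) _. by rewrite mulnCA !mulnA.
Qed.


Lemma bin_bound a b : 0 < a -> a <= b -> 'C(a + b, a) <= (6 * (b %/ a).+1) ^ a.
Proof.
move=> Ha Hab. set d := b %/ a.
have Hd : 0 < d by rewrite divn_gt0.
have HE : b < d.+1 * a by exact: ltn_ceil.
set E := d.+1 * a.
have H1 := bin_pow a b d.
have H2 : d.+1 ^ d.+1 <= 6 * d ^ d.+1.
  exact: nat_bound6.
have H3 : d.+1 ^ E <= 6 ^ a * d ^ E.
  rewrite /E (expnM d.+1) (expnM d) -expnMn leq_exp2r //.
have HdE : 0 < d ^ E by rewrite expn_gt0 Hd.
rewrite -(leq_pmul2r HdE).
have HEb : E = b + (E - b) by rewrite subnKC // ltnW.
have Hs : d ^ E = d ^ b * d ^ (E - b) by rewrite -expnD -HEb.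
have S1 : 'C(a + b, a) * d ^ E <= d.+1 ^ (a + b) * d ^ (E - b).
  by rewrite Hs mulnA leq_mul2r H1 orbT.
have S2 : d.+1 ^ (a + b) * d ^ (E - b) <= d.+1 ^ (a + b) * d.+1 ^ (E - b).
  rewrite leq_mul2l; apply/orP; right.
  case: (E - b) => [|m]; first by [].
  by rewrite leq_exp2r.
have S3 : d.+1 ^ (a + b) * d.+1 ^ (E - b) = d.+1 ^ a * d.+1 ^ E.
  by rewrite -!expnD -addnA -HEb.
have S4 : d.+1 ^ a * d.+1 ^ E <= (6 * d.+1) ^ a * d ^ E.
  by rewrite expnMn [6 ^ a * _]mulnC -mulnA leq_mul2l H3 orbT.
apply: leq_trans S1 _. apply: leq_trans S2 _. by rewrite S3.
Qed.

Lemma sq_pow l : (l + 5) ^ 2 <= 36 * 2 ^ l.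
Proof.
elim: l => [|l IH]; first by rewrite expn0.
apply: (@leq_trans (2 * ((l + 5) ^ 2))).
  have : 5 <= l + 5 by rewrite leq_addl.
  rewrite addSn. move: (l + 5) => m. clear. rewrite !expnS !expn0 !muln1. nia.
rewrite (expnS 2 l) mulnCA leq_mul2l IH. by [].
Qed.

Lemma bin_digits a b : 0 < a -> a <= b ->
  exists Y, 0 < Y /\ 'C(a + b, a) < 2 ^ Y /\ Y ^ 2 <= 36 * (a * b).
Proof.
move=> Ha Hab. have Hbb := @bin_bound a b Ha Hab. move: (leq_divM b a) Hbb.
have := @divn_gt0 a b Ha. rewrite Hab. move: (b %/ a) => d Hd Hda Hbb.
have Hl1 : d < 2 ^ (trunc_log 2 d).+1 by exact: trunc_log_ltn.
have Hl2 : 2 ^ (trunc_log 2 d) <= d by exact: trunc_logP.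
have Hsq := sq_pow (trunc_log 2 d).
move: (trunc_log 2 d) Hl1 Hl2 Hsq => l Hl1 Hl2 Hsq.
exists ((l + 5) * a). split; first by rewrite muln_gt0 addn_gt0 orbT.
split.
  apply: leq_ltn_trans Hbb _.
  rewrite expnM ltn_exp2r //.
  have -> : 2 ^ (l + 5) = 32 * 2 ^ l by rewrite expnD mulnC.
  rewrite expnS in Hl1. move: (2 ^ l) Hl1 Hl2 => X H1 H2. clear -H1 H2 Hd. lia.
rewrite expnMn.
apply: (@leq_trans (36 * 2 ^ l * a ^ 2)); first by rewrite leq_mul2r Hsq orbT.
apply: (@leq_trans (36 * d * a ^ 2)); first by rewrite leq_mul2r leq_mul2l Hl2 !orbT.
rewrite -mulnA leq_mul2l; apply/orP; right.
by rewrite expnS expn1 mulnCA leq_mul2l Hda orbT.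
Qed.

Lemma binKE k e : 0 < k -> 0 < e ->
  exists Y, 0 < Y /\ 'C(k + e, k) < 2 ^ Y /\ Y ^ 2 <= 36 * (k * e).
Proof.
move=> Hk He. case: (leqP k e) => H; first exact: bin_digits.
have [Y [H1 [H2 H3]]] := @bin_digits e k He (ltnW H).
exists Y. by rewrite binC' (addnC k e) (mulnC k e).
Qed.


Lemma qd_le q D x : 1 < q -> 0 < D -> x < q ^ D -> qdigits q x <= D.
Proof.
move=> hq hD hx. rewrite /qdigits. case: eqP => [_|/eqP hx0]; first by [].
have := @trunc_logP q x hq. rewrite lt0n hx0 => /(_ isT) H.
have : q ^ trunc_log q x < q ^ D by exact: leq_ltn_trans H hx.
by rewrite ltn_exp2l.
Qed.

Lemma op_le q D a b : 1 < q -> 0 < D -> a < q ^ D -> b < q ^ D -> opcost q a b <= D.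
Proof. move=> hq hD ha hb. by rewrite /opcost geq_max !qd_le. Qed.

Lemma inner_cost (q D m e j Fprev sumPrev : nat)
  (hq : 1 < q) (hD : 0 < D) (hS : sumPrev + Fprev < q ^ D) (hm : m < q ^ D)
  (hP : forall a h s, a <= Fprev -> h <= e -> pbox a h s < q ^ D) fuel : forall h l, h < q ^ D ->
  (algB_inner fuel q m e j Fprev sumPrev h l).1.2 <= h /\
  (algB_inner fuel q m e j Fprev sumPrev h l).2 <= fuel * (4 * D).
Proof.
elim: fuel => [|fuel IH] h l hh; first by [].
have hqD : 0 < q ^ D by rewrite expn_gt0 (ltnW hq).
have ha : Fprev - l <= Fprev by exact: leq_subr.
have h1 : opcost q sumPrev (Fprev - l) <= D.
  apply: op_le => //; [ apply: leq_ltn_trans hS; exact: leq_addr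
                      | apply: leq_ltn_trans hS; apply: leq_trans ha _; exact: leq_addl].
have h2 : opcost q (sumPrev + (Fprev - l)) m <= D.
  apply: op_le => //. apply: leq_ltn_trans hS. by rewrite leq_add2l.
set N := (if sumPrev + (Fprev - l) <= m then pbox (Fprev - l) (e - j) (m - (sumPrev + (Fprev - l))) else 0).
have hN : N < q ^ D by rewrite /N; case: ifP => _ //; apply: hP => //; exact: leq_subr.
have h3 : opcost q h N <= D by exact: op_le.
rewrite /=. rewrite -/N.
case: ifP => HN.
  have := IH (h - N) l.+1 (leq_ltn_trans (leq_subr _ _) hh).
  case: (algB_inner fuel q m e j Fprev sumPrev (h - N) l.+1) => [[l' h'] c'] /= [Hh' Hc'].
  split; first by apply: leq_trans Hh' (leq_subr _ _).
  rewrite mulSn. lia.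
split; first by [].
  rewrite mulSn /=. lia.
Qed.

Lemma algB_outerS cnt q m e j Fprev sumPrev h :
  algB_outer cnt.+1 q m e j Fprev sumPrev h =
      if sumPrev == m then
        let: (Fs, c) := algB_outer cnt q m e j.+1 0 sumPrev h in
        (0 :: Fs, opcost q sumPrev m + c)
      else
        let: (lh, c1) := algB_inner Fprev.+1 q m e j Fprev sumPrev h 0 in
        let: (l, h') := lh in
        let Fj := Fprev - l in
        let: (Fs, c2) := algB_outer cnt q m e j.+1 Fj (sumPrev + Fj) h' in
        (Fj :: Fs, opcost q sumPrev m + c1 + opcost q sumPrev Fj + c2).
Proof. by []. Qed.

Lemma outer_cost (q D m e k N : nat)
  (hq : 1 < q) (hD : 0 < D) (hm : m < q ^ D) (hN : N < q ^ D)
  (hP : forall a h s, a <= k -> h <= e -> pbox a h s < q ^ D) cnt : forall j Fprev sumPrev h, Fprev <= k -> sumPrev + cnt * k <= N ->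
  h < q ^ D ->
  (algB_outer cnt q m e j Fprev sumPrev h).2 <= cnt * (k.+1 * (4 * D) + 2 * D).
Proof.
elim: cnt => [|cnt IH] j Fprev sumPrev h hF hs hh; first by [].
have hsN : sumPrev < q ^ D by apply: leq_ltn_trans hN; apply: leq_trans hs; exact: leq_addr.
have h0 : opcost q sumPrev m <= D by exact: op_le.
have hs1 : sumPrev + cnt * k <= N by move: hs; rewrite mulSn; clear; lia.
have hs2 : sumPrev + k <= N by move: hs; rewrite mulSn; clear; lia.
rewrite algB_outerS. case: ifP => Hsm.
  have := IH j.+1 0 sumPrev h (leq0n _) hs1 hh.
  case: (algB_outer cnt q m e j.+1 0 sumPrev h) => [Fs c] /= Hc.
  rewrite mulSn. move: h0 Hc; clear; lia.
have hSF : sumPrev + Fprev < q ^ D.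
  apply: leq_ltn_trans hN. apply: leq_trans hs2. by rewrite leq_add2l.
have hPF : forall a h s, a <= Fprev -> h <= e -> pbox a h s < q ^ D.
  move=> a h0' s ha. apply: hP. exact: leq_trans ha hF.
have := @inner_cost q D m e j Fprev sumPrev hq hD hSF hm hPF Fprev.+1 h 0 hh.
case: (algB_inner Fprev.+1 q m e j Fprev sumPrev h 0) => [[l h'] c1] /= [Hh' Hc1].
have hFj : Fprev - l <= k by apply: leq_trans (leq_subr _ _) hF.
have hs3 : sumPrev + (Fprev - l) + cnt * k <= N.
  move: hs hFj; rewrite mulSn; clear; lia.
have := IH j.+1 (Fprev - l) (sumPrev + (Fprev - l)) h' hFj hs3 (leq_ltn_trans Hh' hh).
case: (algB_outer cnt q m e j.+1 (Fprev - l) (sumPrev + (Fprev - l)) h') => [Fs c2] /= Hc2.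
have h4 : opcost q sumPrev (Fprev - l) <= D.
  by apply: op_le => //; apply: leq_ltn_trans hN; move: hFj hs2; clear; lia.
have Hc1' : c1 <= k.+1 * (4 * D) by apply: leq_trans Hc1 _; rewrite leq_mul2r ltnS hF orbT.
rewrite mulSn. move: h0 h4 Hc1' Hc2; clear; lia.
Qed.

Lemma algB_cost q D k e m t : 1 < q -> 0 < D -> m < q ^ D -> k * e < q ^ D ->
  (forall a h s, a <= k -> h <= e -> pbox a h s < q ^ D) -> t < q ^ D ->
  (algB q k e m t).2 <= e * (k.+1 * (4 * D) + 2 * D).
Proof.
move=> hq hD hm hN hP ht. rewrite /algB.
have := @outer_cost q D m e k (k * e) hq hD hm hN hP e 1 k 0 t (leqnn _) _ ht.
case: (algB_outer e q m e 1 k 0 t) => [Fs c] /=. apply. by rewrite add0n mulnC.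
Qed.

Lemma algC_loopS cnt j q k e ij : algC_loop cnt.+1 j q k e ij =
      let m := k * e - j in
      let A := pbox k e m * q ^ m in
      let c0 := opcost q (k * e) j + opcost q ij A in
      if ij < A then
        let t := ij %/ q ^ m in
        let r := ij - t * q ^ m in
        let: (F, cB) := algB q k e m t in
        (Some (F, qrep q m r), c0 + qdigits q ij + opcost q ij (t * q ^ m) + cB + m)
      else
        let: (res, c) := algC_loop cnt j.+1 q k e (ij - A) in
        (res, c0 + opcost q ij A + c).
Proof. by []. Qed.

Lemma loop_cost (q D k e : nat)
  (hq : 1 < q) (hD : 0 < D) (hND : k * e < q ^ D)
  (hP : forall a h s, a <= k -> h <= e -> pbox a h s < q ^ D)
  (hA : forall m, m <= k * e -> pbox k e m * q ^ m < q ^ D) cnt : forall j ij, j + cnt <= (k * e).+1 -> ij < q ^ D ->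
  (algC_loop cnt j q k e ij).2 <=
    cnt * (3 * D) + (3 * D + k * e + e * (k.+1 * (4 * D) + 2 * D)).
Proof.
elim: cnt => [|cnt IH] j ij hj hij; first by [].
rewrite algC_loopS /=.
have hjN : j < q ^ D by apply: leq_ltn_trans hND; move: hj; clear; lia.
have hmN : k * e - j <= k * e by exact: leq_subr.
have hAq := hA (k * e - j) hmN.
have h0 : opcost q (k * e) j <= D by exact: op_le.
have h1 : opcost q ij (pbox k e (k * e - j) * q ^ (k * e - j)) <= D by exact: op_le.
case: ifP => HA.
  have ht : ij %/ q ^ (k * e - j) < q ^ D by apply: leq_ltn_trans hij; exact: leq_div.
  have := @algB_cost q D k e (k * e - j) (ij %/ q ^ (k * e - j)) hq hD
     (leq_ltn_trans hmN hND) hND hP ht.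
  case: (algB q k e (k * e - j) (ij %/ q ^ (k * e - j))) => [F cB] /= HB.
  have h2 : qdigits q ij <= D by exact: qd_le.
  have h3 : opcost q ij (ij %/ q ^ (k * e - j) * q ^ (k * e - j)) <= D.
    apply: op_le => //. apply: leq_ltn_trans hij. exact: leq_divM.
  rewrite mulSn. move: h0 h1 h2 h3 HB hmN; clear; lia.
have := IH j.+1 (ij - pbox k e (k * e - j) * q ^ (k * e - j)) _
          (leq_ltn_trans (leq_subr _ _) hij).
case: (algC_loop cnt j.+1 q k e (ij - pbox k e (k * e - j) * q ^ (k * e - j))) => [res c] /= Hc.
have hj' : j.+1 + cnt <= (k * e).+1 by move: hj; clear; lia.
have {}Hc := Hc hj'.
rewrite mulSn. move: h0 h1 Hc; clear; lia.
Qed.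


Lemma table_le q k e Y : 1 < q -> 0 < Y ->
  (forall a h s, a <= k -> h <= e -> pbox a h s < q ^ Y) ->
  table_cost q k e <= k * (e * ((k * e).+1 * Y)).
Proof.
move=> hq hY hP. rewrite /table_cost.
have hqY : 0 < q ^ Y by rewrite expn_gt0 (ltnW hq).
rewrite big_nat_cond.
apply: (@leq_trans (\sum_(1 <= a < k.+1 | (1 <= a < k.+1) && true) (e * ((k * e).+1 * Y)))).
  apply: leq_sum => a /andP [/andP [Ha1 Ha2] _].
  rewrite big_nat_cond.
  apply: (@leq_trans (\sum_(1 <= h < e.+1 | (1 <= h < e.+1) && true) ((k * e).+1 * Y))).
    apply: leq_sum => h /andP [/andP [Hh1 Hh2] _].
    apply: (@leq_trans (\sum_(0 <= s < (k * e).+1) Y)).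
      apply: leq_sum => s _. apply: op_le => //.
        apply: hP; move: Ha2 Hh2; clear; lia.
      case: ifP => _ //. apply: hP; move: Ha2 Hh2; clear; lia.
    by rewrite sum_nat_const_nat subn0.
  by rewrite -big_nat_cond sum_nat_const_nat subn1.
by rewrite -big_nat_cond sum_nat_const_nat subn1.
Qed.


Lemma pp_gt1 q : prime_power q -> 1 < q.
Proof.
move=> [p [e' [hp [he ->]]]]. apply: leq_trans (prime_gt1 hp) _.
by rewrite -{1}(expn1 p) leq_pexp2l // prime_gt0.
Qed.

Lemma final_arith N Y T e k D :
  0 < N -> 0 < Y -> Y ^ 2 <= 36 * N -> D = 2 * N + Y + 1 -> e <= N -> e * k.+1 <= 2 * N ->
  T <= N * (N.+1 * Y) + (N.+1 * (3 * D) + (3 * D + N + e * (k.+1 * (4 * D) + 2 * D))) ->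
  T ^ 2 <= 175 * 175 * 36 * N ^ 5.
Proof.
move=> hN hY hY2 hD he hek hT.
have hY6 : Y <= 6 * N by move: hY2 hN; rewrite !expnS expn0 !muln1; clear; nia.
have hD8 : D <= 9 * N by lia.
have h1 : N * (N.+1 * Y) <= 2 * (N * N * Y) by clear -hN; nia.
have h2 : N.+1 * (3 * D) <= 54 * (N * N) by clear -hN hD8; nia.
have h3 : 3 * D + N <= 28 * (N * N) by clear -hN hD8; nia.
have h4 : e * (k.+1 * (4 * D)) <= 72 * (N * N) by clear -hek hD8 hN; nia.
have h5 : e * (2 * D) <= 18 * (N * N) by clear -he hD8 hN; nia.
have hT' : T <= 175 * (N * N * Y).
  rewrite mulnDr in hT.
  have : N * N <= N * N * Y by rewrite leq_pmulr.
  move: hT h1 h2 h3 h4 h5; clear; lia.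
have S1 : T ^ 2 <= (175 * (N * N * Y)) * (175 * (N * N * Y)) by exact: leq_mul.
apply: leq_trans S1 _.
have E1 : (175 * (N * N * Y)) * (175 * (N * N * Y)) = 175 * 175 * ((N * N * (N * N)) * (Y * Y)).
  clear; lia.
rewrite E1.
have E2 : 175 * 175 * 36 * N ^ 5 = 175 * 175 * ((N * N * (N * N)) * (36 * N)).
  rewrite !expnS expn0 muln1. clear; lia.
rewrite E2 leq_mul2l; apply/orP; right. rewrite leq_mul2l; apply/orP; right.
exact: hY2.
Qed.

Theorem theorem10 (q : nat) (Hq : prime_power q) :
  exists C : nat, forall n k i : nat,
    0 < k < n -> i < gauss_binom q n k ->
    (algC q n k i).1 != None /\
    (algC q n k i).2 ^ 2 <= C * (k * (n - k)) ^ 5.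
Proof.
have hq := pp_gt1 q Hq.
exists (175 * 175 * 36) => n k i /andP [hk hkn] hi.
have hq0 : 0 < q by exact: ltnW.
set e := n - k.
have he : 0 < e by rewrite /e subn_gt0.
have hn : n = k + e by rewrite /e subnKC // ltnW.
rewrite hn (@gauss_Gs q k e hq) in hi.
have [Y [hY [hBY hY2]]] := @binKE k e hk he.
have hBq : 'C(k + e, k) < q ^ Y.
  apply: leq_trans hBY _. by rewrite leq_exp2r.
have hPY : forall a h s, a <= k -> h <= e -> pbox a h s < q ^ Y.
  move=> a h s ha hh. apply: leq_ltn_trans (pbox_bin a h s) _.
  apply: leq_ltn_trans hBq. exact: bin_mono.
set N := k * e.
have hN : 0 < N by rewrite muln_gt0 hk.
set D := 2 * N + Y + 1.
have hD : 0 < D by rewrite /D addn1.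
have hNq : N < q ^ N by exact: ltn_expl.
have hqmono : forall a b, a <= b -> q ^ a <= q ^ b by move=> a b; exact: leq_pexp2l.
have hND : N < q ^ D.
  apply: leq_trans hNq _. apply: hqmono. by rewrite /D mul2n -addnn -!addnA leq_addr.
have hPD : forall a h s, a <= k -> h <= e -> pbox a h s < q ^ D.
  move=> a h s ha hh. apply: leq_trans (hPY a h s ha hh) _. apply: hqmono.
  by rewrite /D -addnA (addnC Y) addnA leq_addl.
have hA : forall m, m <= N -> pbox k e m * q ^ m < q ^ D.
  move=> m hm. have h1 := hPY k e m (leqnn _) (leqnn _).
  apply: (@leq_trans (q ^ Y * q ^ m)).
    by rewrite ltn_pmul2r ?expn_gt0 ?hq0.
  rewrite -expnD. apply: hqmono. rewrite /D (addnC Y m) -addnA (addnC Y 1) addnA leq_add2r.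
  apply: leq_trans hm _. by rewrite mul2n -addnn -addnA leq_addr.
have hGs : Gs q k e < q ^ D.
  rewrite /Gs -/N.
  apply: (@leq_ltn_trans (\sum_(s < N.+1) q ^ (Y + N))).
    apply: leq_sum => s _. rewrite expnD. apply: leq_mul.
      exact: ltnW (hPY _ _ _ (leqnn _) (leqnn _)).
    apply: hqmono. by rewrite -ltnS.
  rewrite sum_nat_const card_ord.
  apply: (@leq_ltn_trans (q ^ N * q ^ (Y + N))).
    rewrite leq_mul2r; apply/orP; right. exact: hNq.
  rewrite -expnD ltn_exp2l //. rewrite /D mul2n -addnn. have aux : forall a b, a + (b + a) < a + a + b + 1 by move=> a b; lia. exact: aux.
have hiD : i < q ^ D by exact: ltn_trans hi hGs.
rewrite /algC -/e.
have HS := @algC_some q k e N.+1 0 i (add0n _) hi.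
have HL := @loop_cost q D k e hq hD hND hPD hA N.+1 0 i (leqnn _) hiD.
have HT := @table_le q k e Y hq hY hPY.
case: (algC_loop N.+1 0 q k e i) HS HL => [res c] /= HS HL.
split; first exact: HS.
apply: (@final_arith N Y _ e k D hN hY hY2 erefl).
  by rewrite /N leq_pmull.
  have aux : forall a b, 0 < a -> b * a.+1 <= 2 * (a * b) by move=> a b ha; nia.
  exact: aux.
rewrite mulnA -/N in HT. rewrite -/N in HL. exact: leq_add HT HL.
Qed.
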